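(* Let $\bar x$ be a sparsest solution of problem (P), and let $\tilde X$ be an optimal solution of the QBP program for some $\lambda\ge0$. Suppose that: - $\operatorname{rank}(\tilde X)=1$; - $B$ is $(\epsilon,2\|\tilde X\|_0)$-RIP-1 for some $\epsilon<1$. Then $\tilde X=\begin{bmatrix}1\\ \bar x\end{bmatrix}\begin{bmatrix}1 & \bar x^H\end{bmatrix}$.
   Context: Fix integers $n,N\ge 1$ and data $a_i\in\mathbb{C}$, $b_i,c_i\in\mathbb{C}^n$, $Q_i\in\mathbb{C}^{n\times n}$, $y_i\in\mathbb{C}$ for $i=1,\dots,N$. Problem (P) is $$\min_{x\in\mathbb{C}^n}\|x\|_0\quad\text{subject to}\quad y_i=a_i+b_i^H x+x^H c_i+x^H Q_i x,\quad i=1,\dots,N.$$ Here $\|\cdot\|_0$ counts nonzero entries of a vector or matrix, and ${}^H$ denotes conjugate transpose. Let $\Phi_i=\begin{bmatrix} a_i & b_i^H\\ c_i & Q_i\end{bmatrix}\in\mathbb{C}^{(n+1)\times(n+1)}$. Define the linear operator $B:\mathbb{C}^{(n+1)\times(n+1)}\to\mathbb{C}^N$ by $B(X)=(\operatorname{tr}(\Phi_i X))_{i=1}^N$. The QBP program with parameter $\lambda\ge0$ is $$\min_{X}\ \operatorname{tr}(X)+\lambda\|X\|_1\quad\text{subject to}\quad y_i=\operatorname{tr}(\Phi_i X)\ (i=1,\dots,N),\quad X_{1,1}=1,\quad X\succeq0,$$ where $X$ ranges over Hermitian $(n+1)\times(n+1)$ matrices and $\|\cdot\|_1$ is the sum of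 absolute values of the entries of a vector or matrix. $B$ is called $(\epsilon,k)$-RIP-1 if $\left|\frac{\|B(X)\|_1}{\|X\|_1}-1\right|<\epsilon$ for every nonzero $X$ with $\|X\|_0\le k$. *)

(* Defs.v *)
(* Complex numbers are modelled by an arbitrary
   numClosedFieldType C (algebraically closed field with conjugation and
   the partial order of C: 0 <= z iff z is real and nonnegative). *)
From HB Require Import structures.
From mathcomp Require Import all_boot all_order all_algebra.
Set Implicit Arguments. Unset Strict Implicit. Unset Printing Implicit Defensive.
Import Order.TTheory GRing.Theory Num.Theory.
Local Open Scope ring_scope.

Section Defs.
Variable C : numClosedFieldType.

Definition conjT m n (A : 'M[C]_(m, n)) : 'M[C]_(n, m) := (map_mx Num.conj A)^T.

Definition l0 m n (A : 'M[C]_(m, n)) : nat :=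
  #|[set p : 'I_m * 'I_n | A p.1 p.2 != 0]|.

Definition l1 m n (A : 'M[C]_(m, n)) : C := \sum_(i < m) \sum_(j < n) `|A i j|.

Definition l1vec N (v : 'I_N -> C) : C := \sum_(i < N) `|v i|.

Definition hermitian m (X : 'M[C]_m) : Prop := conjT X = X.

Definition psd m (X : 'M[C]_m) : Prop :=
  hermitian X /\ forall v : 'cV[C]_m, 0 <= (conjT v *m X *m v) 0 0.

Definition Phi n (a : C) (b c : 'cV[C]_n) (Q : 'M[C]_n) : 'M[C]_(1 + n) :=
  block_mx (a%:M) (conjT b) c Q.

Definition quadval n (a : C) (b c : 'cV[C]_n) (Q : 'M[C]_n) (x : 'cV[C]_n) : C :=
  a + (conjT b *m x) 0 0 + (conjT x *m c) 0 0 + (conjT x *m Q *m x) 0 0.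

Definition feasibleP n N (a : 'I_N -> C) (b c : 'I_N -> 'cV[C]_n)
  (Q : 'I_N -> 'M[C]_n) (y : 'I_N -> C) (x : 'cV[C]_n) : Prop :=
  forall i, y i = quadval (a i) (b i) (c i) (Q i) x.

Definition sparsest n N a b c Q y (x : 'cV[C]_n) : Prop :=
  @feasibleP n N a b c Q y x /\
  forall x', @feasibleP n N a b c Q y x' -> (l0 x <= l0 x')%N.

Definition Bop n N (a : 'I_N -> C) (b c : 'I_N -> 'cV[C]_n) (Q : 'I_N -> 'M[C]_n)
  (X : 'M[C]_(1 + n)) : 'I_N -> C :=
  fun i => \tr (Phi (a i) (b i) (c i) (Q i) *m X).

Definition feasibleQBP n N a b c Q (y : 'I_N -> C) (X : 'M[C]_(1 + n)) : Prop :=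
  [/\ forall i, y i = @Bop n N a b c Q X i,
      X ord0 ord0 = 1 & psd X].

Definition qbp_obj n (lam : C) (X : 'M[C]_(1 + n)) : C := \tr X + lam * l1 X.

Definition optimalQBP n N a b c Q y (lam : C) (X : 'M[C]_(1 + n)) : Prop :=
  @feasibleQBP n N a b c Q y X /\
  forall X', @feasibleQBP n N a b c Q y X' -> qbp_obj lam X <= qbp_obj lam X'.

Definition RIP1 n N a b c Q (eps : C) (k : nat) : Prop :=
  forall X : 'M[C]_(1 + n), X != 0 -> (l0 X <= k)%N ->
    `| l1vec (@Bop n N a b c Q X) / l1 X - 1 | < eps.

End Defs.

(* Main.v *)
Require Import Defs.
From HB Require Import structures.
From mathcomp Require Import all_boot all_order all_algebra.
From mathcomp Require Import ring zify.
Import Order.TTheory GRing.Theory Num.Theory.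
Local Open Scope ring_scope.
Section Aux. Variable C : numClosedFieldType.
Lemma conjT_col m1 m2 (A : 'M[C]_(m1, 1)) (B : 'M[C]_(m2, 1)) :
  conjT (col_mx A B) = row_mx (conjT A) (conjT B).
Proof. by rewrite /conjT map_col_mx tr_col_mx. Qed.

Lemma conjT1 : conjT (1%:M : 'M[C]_1) = 1%:M.
Proof. by apply/matrixP => i j; rewrite !mxE !ord1 /= conjC1. Qed.

Lemma quad_tr n (a : C) (b c : 'cV[C]_n) (Q : 'M[C]_n) (x : 'cV[C]_n) :
  \tr (Phi a b c Q *m (col_mx 1%:M x *m conjT (col_mx 1%:M x))) = quadval a b c Q x.
Proof.
rewrite mulmxA mxtrace_mulC /mxtrace big_ord1 conjT_col conjT1 /Phi.
rewrite mul_block_col mul_row_col !mul1mx !mulmx1 !mulmxDr !mulmxA.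
rewrite /quadval !mxE /= mulr1n.
rewrite -!addrA; congr (_ + _); rewrite addrC -!addrA; congr (_ + _); by rewrite addrC.
Qed.

Lemma l0_sum m n (A : 'M[C]_(m, n)) :
  l0 A = (\sum_i \sum_j (A i j != 0%R : nat))%N.
Proof.
rewrite /l0 pair_bigA /= -sum1_card big_mkcond /=.
by apply: eq_bigr => p _; rewrite inE; case: (A p.1 p.2 != 0).
Qed.

Lemma l0_sub m n (A B : 'M[C]_(m, n)) : (l0 (A - B) <= l0 A + l0 B)%N.
Proof.
rewrite !l0_sum -big_split /=; apply: leq_sum => i _; rewrite -big_split /=; apply: leq_sum => j _.
rewrite !mxE; case: (eqVneq (A i j) 0) => [->|nz]; last by apply: leq_trans (leq_b1 _) _.
by rewrite sub0r oppr_eq0; case: (B i j != 0).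
Qed.

Lemma l0_rank1 n (x : 'cV[C]_n) :
  l0 (col_mx 1%:M x *m conjT (col_mx 1%:M x)) = ((1 + l0 x) * (1 + l0 x))%N.
Proof.
have -> : (1 + l0 x = \sum_i (col_mx (1%:M : 'M[C]_1) x i ord0 != 0%R : nat))%N.
  rewrite big_split_ord big_ord1 l0_sum; congr (_ + _)%N.
    by rewrite col_mxEu !mxE oner_eq0.
  by apply: eq_bigr => i _; rewrite big_ord1 col_mxEd.
rewrite l0_sum big_distrl /=; apply: eq_bigr => i _.
rewrite big_distrr /=; apply: eq_bigr => j _.
rewrite !mxE big_ord1 !mxE mulf_eq0 negb_or conjC_eq0.
by case: (_ != 0); case: (_ != 0).
Qed.
Lemma rank1_entries m p (X : 'M[C]_(m, p)) : \rank X = 1%N ->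
  forall i j k l, X i j * X k l = X i l * X k j.
Proof.
move=> Hr i j k l; have := mulmx_base X.
move: (col_base X) (row_base X); rewrite Hr => u v <-.
rewrite !mxE !big_ord1; ring.
Qed.
End Aux.

Theorem mainTheorem4 (C : numClosedFieldType) (n N : nat) (hn : (1 <= n)%N) (hN : (1 <= N)%N)
  (a : 'I_N -> C) (b c : 'I_N -> 'cV[C]_n) (Q : 'I_N -> 'M[C]_n) (y : 'I_N -> C)
  (xbar : 'cV[C]_n) (lam : C) (Xt : 'M[C]_(1 + n)) :
  0 <= lam ->
  sparsest a b c Q y xbar ->
  optimalQBP a b c Q y lam Xt ->
  \rank Xt = 1%N ->
  (exists eps : C, eps < 1 /\ RIP1 a b c Q eps (2 * l0 Xt)) ->
  Xt = col_mx (1%:M : 'M[C]_1) xbar *m conjT (col_mx (1%:M : 'M[C]_1) xbar).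
Proof.
move=> lam0 [featbar minbar] [[featXt X00 [herm _]] _] Hr [eps [eps1 rip]].
pose z : 'cV[C]_(1 + n) := \col_i Xt i ord0.
pose xt := dsubmx z.
have Xt_eq : Xt = col_mx (1%:M : 'M[C]_1) xt *m conjT (col_mx (1%:M : 'M[C]_1) xt).
  have -> : col_mx (1%:M : 'M[C]_1) xt = z.
    rewrite -[z in RHS](vsubmxK z); congr col_mx; apply/matrixP => i j.
    rewrite !ord1 !mxE /=.
    have -> : (lshift n ord0 : 'I_(1 + n)) = ord0 by apply: val_inj.
    by rewrite X00.
  apply/matrixP => i j; rewrite !mxE big_ord1 !mxE.
  have hj : (Xt j ord0)^* = Xt ord0 j.
    by rewrite -[in RHS]herm /conjT !mxE.
  rewrite hj rank1_entries // X00 mulr1 //.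
have featxt : feasibleP a b c Q y xt.
  by move=> i; rewrite featXt /Bop Xt_eq quad_tr.
have Hl0 := minbar xt featxt.
set Xbar := col_mx (1%:M : 'M[C]_1) xbar *m conjT (col_mx (1%:M : 'M[C]_1) xbar).
have featXbar : forall i, y i = Bop a b c Q Xbar i.
  by move=> i; rewrite /Bop quad_tr featbar.
have BD : forall i, Bop a b c Q (Xt - Xbar) i = 0.
  move=> i; have := featXt i; have := featXbar i; rewrite /Bop mulmxBr linearB /= => e1 e2; by rewrite -e1 -e2 subrr.
case: (eqVneq (Xt - Xbar) 0) => [/eqP|nzD]; first by rewrite subr_eq0 => /eqP.
have hl : (l0 (Xt - Xbar)%R <= 2 * l0 Xt)%N.
  apply: leq_trans (@l0_sub _ _ _ Xt Xbar) _.
  have : (l0 Xbar <= l0 Xt)%N.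
    by rewrite Xt_eq /Xbar !l0_rank1 leq_mul // leq_add2l.
  lia.
have := rip _ nzD hl.
rewrite /l1vec big1 => [|i _]; last by rewrite BD normr0.
rewrite mul0r sub0r normrN normr1 => h.
by have := lt_trans h eps1; rewrite ltxx.
Qed.
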